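(* Let $U_n\subset C^n([a,b],\mathbb{K})$ ($\mathbb{K}=\mathbb{R}$ or $\mathbb{C}$, $a<b$) be a subspace of dimension $n+1$ with a Bernstein basis $p_{n,0},\dots,p_{n,n}$ for $\{a,b\}$. Let $f_0\in U_n$ be strictly positive and suppose $D_{f_0}U_n$ has a Bernstein basis $q_{n-1,0},\dots,q_{n-1,n-1}$ for $\{a,b\}$. Define the (non-zero) numbers $$c_k=\frac{p_{n,k}^{(k)}(a)}{f_0(a)\,q_{n-1,k-1}^{(k-1)}(a)}\ (k=1,\dots,n),\qquad d_k=\frac{p_{n,k}^{(n-k)}(b)}{f_0(b)\,q_{n-1,k}^{(n-1-k)}(b)}\ (k=0,\dots,n-1).$$ Then $$f_0(x)=\frac{f_0(a)}{p_{n,0}(a)}p_{n,0}(x)+\sum_{k=1}^n(-1)^k\frac{d_0\cdots d_{k-1}}{c_1\cdots c_k}\,\frac{f_0(a)}{p_{n,0}(a)}\,p_{n,k}(x).$$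
   Context: A function $f\in C^m([a,b],\mathbb{K})$ has a zero of order $k$ at $c$ if $f(c)=\dots=f^{(k-1)}(c)=0$ and $f^{(k)}(c)\ne0$ (one-sided derivatives at endpoints). For an $(m+1)$-dimensional space $V\subset C^m([a,b],\mathbb{K})$, a Bernstein basis for $\{a,b\}$ is a system $p_{m,0},\dots,p_{m,m}$ in $V$ such that each $p_{m,k}$ has a zero of order exactly $k$ at $a$ and of order exactly $m-k$ at $b$. For strictly positive (real-valued, $>0$ on $[a,b]$) $f_0\in U_n$, $D_{f_0}U_n:=\{\frac{d}{dx}(f/f_0):f\in U_n\}$, an $n$-dimensional subspace of $C^{n-1}([a,b],\mathbb{K})$. *)

(* Defs.v *)
(* Functions
   [a,b] -> K are represented as functions R -> R[i]; only their values on
   [a,b] matter.  In the real case (K = R) the functions are R[i]-valued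
   functions taking real values on [a,b], and the scalars are real. *)
From HB Require Import structures.
From mathcomp Require Import all_boot all_order all_algebra.
From mathcomp Require Import complex.
From mathcomp Require Import boolp classical_sets reals.
Set Implicit Arguments. Unset Strict Implicit. Unset Printing Implicit Defensive.
Import Order.TTheory GRing.Theory Num.Theory.
Local Open Scope ring_scope.
Local Open Scope complex_scope.

Section Defs.
Variable R : realType.
Local Notation C := R[i].

Definition in_ab (a b x : R) : Prop := a <= x <= b.

Definition is_deriv_within (a b : R) (f : R -> C) (x : R) (L : C) : Prop :=
  forall eps : R, 0 < eps -> exists2 delta : R, 0 < delta &
    forall h : R, h != 0 -> `|h| < delta -> in_ab a b (x + h) ->
      `| (f (x + h) - f x) / h%:C - L | < eps%:C.

(* the derivative within [a,b] (a chosen value; meaningful when it exists) *)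
Definition dwithin (a b : R) (f : R -> C) : R -> C :=
  fun x => xget 0 [set L | is_deriv_within a b f x L].

Definition nderiv (a b : R) (k : nat) (f : R -> C) : R -> C :=
  iter k (dwithin a b) f.

Definition cont_within (a b : R) (f : R -> C) (x : R) : Prop :=
  forall eps : R, 0 < eps -> exists2 delta : R, 0 < delta &
    forall y : R, in_ab a b y -> `|y - x| < delta -> `|f y - f x| < eps%:C.

Definition Cm (a b : R) (m : nat) (f : R -> C) : Prop :=
  forall k : nat, (k <= m)%N -> forall x : R, in_ab a b x ->
    ((k < m)%N -> exists L, is_deriv_within a b (nderiv a b k f) x L) /\
    cont_within a b (nderiv a b k f) x.

(* scalar field K : R (rc = true) or C (rc = false) *)
Definition scalK (rc : bool) (z : C) : bool := if rc then z \is Num.real else true.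

Definition subspaceCm (rc : bool) (a b : R) (m : nat) (V : (R -> C) -> Prop) : Prop :=
  V (fun _ => 0) /\
  (forall f g (l : C), V f -> V g -> scalK rc l -> V (fun x => l * f x + g x)) /\
  (forall f, V f -> Cm a b m f) /\
  (forall f, V f -> forall x, in_ab a b x -> scalK rc (f x)).

Definition has_dim (rc : bool) (a b : R) (V : (R -> C) -> Prop) (d : nat) : Prop :=
  exists e : 'I_d -> (R -> C),
    (forall i, V (e i)) /\
    (forall l : 'I_d -> C, (forall i, scalK rc (l i)) ->
       (forall x, in_ab a b x -> \sum_(i < d) l i * e i x = 0) ->
       forall i, l i = 0) /\
    (forall f, V f -> exists2 l : 'I_d -> C, (forall i, scalK rc (l i)) &
       forall x, in_ab a b x -> f x = \sum_(i < d) l i * e i x).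

Definition zero_order (a b : R) (f : R -> C) (c : R) (k : nat) : Prop :=
  (forall j : nat, (j < k)%N -> nderiv a b j f c = 0) /\ nderiv a b k f c != 0.

Definition bernstein_basis (a b : R) (m : nat) (V : (R -> C) -> Prop)
  (p : nat -> R -> C) : Prop :=
  forall k : nat, (k <= m)%N ->
    V (p k) /\ zero_order a b (p k) a k /\ zero_order a b (p k) b (m - k).

Definition Dspace (a b : R) (f0 : R -> C) (U : (R -> C) -> Prop) : (R -> C) -> Prop :=
  fun g => exists2 f, U f &
    forall x, in_ab a b x -> g x = dwithin a b (fun y => f y / f0 y) x.

End Defs.

(* Main.v *)
Require Import Defs.
From HB Require Import structures.
From mathcomp Require Import all_boot all_order all_algebra.
From mathcomp Require Import complex.
From mathcomp Require Import boolp classical_sets reals.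
From mathcomp Require Import ring lra zify.
From Stdlib Require Import Lia.
Import Order.TTheory GRing.Theory Num.Theory.
Local Open Scope ring_scope.
Local Open Scope complex_scope.
Set Implicit Arguments. Unset Strict Implicit.

Section Lim.
Variable R : realType.
Variable K : numFieldType.

Definition tends (P : R -> Prop) (F : R -> K) (L : K) :=
  forall e : K, 0 < e -> exists2 d : R, 0 < d &
    forall h, P h -> `|h| < d -> `|F h - L| < e.

Lemma tends_ext P F G L : (forall h, P h -> F h = G h) -> tends P F L -> tends P G L.
Proof.
move=> FG tF e e0; have [d d0 Hd] := tF e e0; exists d => // h Ph hd.
by rewrite -FG //; apply: Hd.
Qed.

Lemma tends_sub (P Q : R -> Prop) F L : (forall h, Q h -> P h) -> tends P F L -> tends Q F L.
Proof.
move=> QP tF e e0; have [d d0 Hd] := tF e e0; exists d => // h Ph hd.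
by apply: Hd => //; apply: QP.
Qed.

Lemma tends_cst P L : tends P (fun _ => L) L.
Proof. by move=> e e0; exists 1 => // h _ _; rewrite subrr normr0. Qed.

Lemma tends_add P F G L M : tends P F L -> tends P G M ->
  tends P (fun h => F h + G h) (L + M).
Proof.
move=> tF tG e e0.
have e2 : 0 < e / 2 by rewrite divr_gt0.
have [d1 d10 H1] := tF _ e2; have [d2 d20 H2] := tG _ e2.
exists (Num.min d1 d2); first by rewrite lt_min d10 d20.
move=> h Ph; rewrite lt_min => /andP[h1 h2].
have -> : F h + G h - (L + M) = (F h - L) + (G h - M) by rewrite opprD addrACA.
apply: (le_lt_trans (ler_normD _ _)).
by rewrite [e](splitr e); apply: ltrD; [apply: H1|apply: H2].
Qed.

Lemma tends_scale P F L c : tends P F L -> tends P (fun h => c * F h) (c * L).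
Proof.
move=> tF; have [->|c0] := eqVneq c 0.
  by apply: (tends_ext (F := fun _ => 0)) => [h _|]; rewrite ?mul0r //; apply: tends_cst.
move=> e e0; have ec : 0 < e / `|c| by rewrite divr_gt0 ?normr_gt0.
have [d d0 Hd] := tF _ ec; exists d => // h Ph hd.
rewrite -mulrBr normrM -ltr_pdivlMl ?normr_gt0 // mulrC; exact: Hd.
Qed.

Lemma tends0_mul P u v : tends P u 0 -> tends P v 0 -> tends P (fun h => u h * v h) 0.
Proof.
move=> tu tv e e0.
have [d1 d10 H1] := tu _ e0; have [d2 d20 H2] := tv _ ltr01.
exists (Num.min d1 d2); first by rewrite lt_min d10 d20.
move=> h Ph; rewrite lt_min => /andP[h1 h2].
have := H1 _ Ph h1; have := H2 _ Ph h2; rewrite !subr0 normrM => v1 u1.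
apply: (le_lt_trans _ u1); apply: ler_piMr => //; exact: ltW.
Qed.

Lemma tends_mul P F G L M : tends P F L -> tends P G M ->
  tends P (fun h => F h * G h) (L * M).
Proof.
move=> tF tG.
have t0 : tends P (fun h => (F h - L) * (G h - M)) 0.
  apply: tends0_mul.
    apply: (tends_ext (F := fun h => F h + (- L))) => // .
    by rewrite -(subrr L); apply: tends_add => //; apply: tends_cst.
  apply: (tends_ext (F := fun h => G h + (- M))) => // .
  by rewrite -(subrr M); apply: tends_add => //; apply: tends_cst.
have t1 := tends_add (tends_add t0 (tends_scale L tG)) (tends_scale M tF).
have t2 := tends_add t1 (tends_cst P (- (L * M))).
have -> : L * M = 0 + L * M + M * L + - (L * M) by ring.
by apply: (tends_ext _ t2) => h _; ring.
Qed.

Lemma tends_inv P G M : M != 0 -> tends P G M -> tends P (fun h => (G h)^-1) M^-1.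
Proof.
move=> M0 tG e e0.
have nM : 0 < `|M| by rewrite normr_gt0.
have m2 : 0 < `|M| / 2 by rewrite divr_gt0.
have em : 0 < e * (`|M| / 2 * `|M|) by apply: mulr_gt0 => //; apply: mulr_gt0.
have [d1 d10 H1] := tG _ m2; have [d2 d20 H2] := tG _ em.
exists (Num.min d1 d2); first by rewrite lt_min d10 d20.
move=> h Ph; rewrite lt_min => /andP[h1 h2].
have g1 := H1 _ Ph h1; have g2 := H2 _ Ph h2.
have gM : `|M| / 2 < `|G h|.
  have hle : `|M| <= `|G h| + `|G h - M|.
    by have := ler_normB (G h) (G h - M); rewrite opprB addrCA subrr addr0.
 rewrite -(ltrD2r (`|M| / 2)) -splitr.
  apply: (le_lt_trans hle); rewrite ltrD2l //.
have G0 : G h != 0 by rewrite -normr_gt0; apply: lt_trans gM.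
have -> : (G h)^-1 - M^-1 = (M - G h) / (G h * M) by field; rewrite G0 M0.
rewrite normrM normfV normrM ltr_pdivrMr ?mulr_gt0 ?normr_gt0 //.
rewrite distrC; apply: (lt_le_trans g2); rewrite ler_pM2l //.
by rewrite ler_pM2r // ltW.
Qed.

Lemma tends_unique P F L1 L2 :
  (forall d : R, 0 < d -> exists h, P h /\ `|h| < d) ->
  tends P F L1 -> tends P F L2 -> L1 = L2.
Proof.
move=> hP t1 t2; apply/eqP; rewrite -subr_eq0; apply/negP => /negP ne.
have e0 : 0 < `|L1 - L2| / 2 by rewrite divr_gt0 ?normr_gt0.
have [d1 d10 H1] := t1 _ e0; have [d2 d20 H2] := t2 _ e0.
have md : 0 < Num.min d1 d2 by rewrite lt_min d10 d20.
have [h [Ph hd]] := hP _ md.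
move: hd; rewrite lt_min => /andP[h1 h2].
have := ltrD (H1 _ Ph h1) (H2 _ Ph h2); rewrite -splitr.
have : `|L1 - L2| <= `|F h - L2| + `|F h - L1|.
  have -> : L1 - L2 = (F h - L2) - (F h - L1) by ring.
  exact: ler_normB.
by move=> hle hlt; rewrite addrC in hlt; have := le_lt_trans hle hlt; rewrite ltxx.
Qed.

End Lim.

Section Deriv.
Variable R : realType.
Local Notation C := R[i].
Variables a b : R.
Hypothesis ab : a < b.

Definition Pd (x : R) := fun h : R => h != 0 /\ in_ab a b (x + h).
Definition Pc (x : R) := fun h : R => in_ab a b (x + h).
Definition dq (f : R -> C) x := fun h : R => (f (x + h) - f x) / h%:C.

Lemma posC (e : C) : 0 < e -> e = (complex.Re e)%:C /\ 0 < complex.Re e.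
Proof. by case: e => r i; rewrite ltcE /= => /andP[/eqP -> ->]. Qed.

Lemma normC_real (h : R) : `|h%:C| = `|h|%:C.
Proof. by rewrite normc_def /= expr0n addr0 sqrtr_sqr. Qed.

Lemma derivE f x L : is_deriv_within a b f x L <-> tends (Pd x) (dq f x) L.
Proof.
split.
  move=> H e e0; have [-> r0] := posC e0.
  have [d d0 Hd] := H _ r0; exists d => // h [h0 hab] hd; exact: Hd.
move=> H eps eps0; have e0 : 0 < eps%:C by rewrite ltcR.
have [d d0 Hd] := H (eps%:C) e0.
exists d => // h h0 hd hab; exact: Hd.
Qed.

Lemma contE f x : cont_within a b f x <-> tends (Pc x) (fun h => f (x + h)) (f x).
Proof.
split.
  move=> H e e0; have [-> r0] := posC e0.
  have [d d0 Hd] := H _ r0; exists d => // h hab hd.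
  by apply: Hd => //; rewrite addrAC subrr add0r.
move=> H eps eps0; have e0 : 0 < eps%:C by rewrite ltcR.
have [d d0 Hd] := H (eps%:C) e0.
exists d => // y hy yd; have := Hd (y - x); rewrite /Pc [x + _]addrC subrK; apply => //.
Qed.

Lemma tends_h P : tends P (fun h : R => h%:C) 0.
Proof.
move=> e e0; have [-> r0] := posC e0; exists (complex.Re e) => // h _ hd.
by rewrite subr0 normC_real ltcR.
Qed.

Lemma tends_0 (Q : R -> Prop) (F : R -> C) L :
  tends (fun h => h != 0 /\ Q h) F L -> F 0 = L -> tends Q F L.
Proof.
move=> H F0 e e0; have [d d0 Hd] := H e e0; exists d => // h Qh hd.
have [->|h0] := eqVneq h 0; first by rewrite F0 subrr normr0.
exact: Hd.
Qed.

Lemma Pd_dense x : in_ab a b x -> forall d : R, 0 < d -> exists h, Pd x h /\ `|h| < d.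
Proof.
move=> /andP[xa xb] d d0.
have [xlt|xge] := ltP x b.
  set m := Num.min d (b - x).
  have m0 : 0 < m by rewrite lt_min d0 subr_gt0 xlt.
  have md : m <= d by rewrite ge_min lexx.
  have mb : m <= b - x by rewrite ge_min lexx orbT.
  exists (m / 2); split; last by rewrite gtr0_norm ?divr_gt0 //; lra.
  split; first by rewrite gt_eqF ?divr_gt0.
  by apply/andP; split; lra.
set m := Num.min d (b - a).
have m0 : 0 < m by rewrite lt_min d0 subr_gt0 ab.
have md : m <= d by rewrite ge_min lexx.
have mb : m <= b - a by rewrite ge_min lexx orbT.
exists (- (m / 2)); split; last by rewrite normrN gtr0_norm ?divr_gt0 //; lra.
split; first by rewrite oppr_eq0 gt_eqF ?divr_gt0.
by apply/andP; split; lra.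
Qed.

Lemma deriv_unique f x L1 L2 : in_ab a b x ->
  is_deriv_within a b f x L1 -> is_deriv_within a b f x L2 -> L1 = L2.
Proof.
by move=> xab /derivE H1 /derivE H2; apply: (tends_unique (Pd_dense xab) H1 H2).
Qed.

Lemma Dval f x L : in_ab a b x -> is_deriv_within a b f x L -> dwithin a b f x = L.
Proof.
move=> xab H; apply: xget_unique => // L' H'; exact: deriv_unique H' H.
Qed.

Lemma deriv_cont f x L : is_deriv_within a b f x L -> cont_within a b f x.
Proof.
move=> /derivE H; apply/contE.
have t := tends_mul H (tends_h (Pd x)).
have t2 := tends_add t (tends_cst (Pd x) (f x)).
rewrite mulr0 add0r in t2.
apply: tends_0; last by rewrite addr0.
apply: (tends_ext _ t2) => h [h0 _].
rewrite /dq -mulrA mulVf ?mulr1 ?subrK //.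
by apply/eqP => /complexI /eqP; rewrite (negbTE h0).
Qed.

Lemma deriv_lin f g l x Lf Lg : is_deriv_within a b f x Lf -> is_deriv_within a b g x Lg ->
  is_deriv_within a b (fun y => l * f y + g y) x (l * Lf + Lg).
Proof.
move=> /derivE Hf /derivE Hg; apply/derivE.
apply: (tends_ext _ (tends_add (tends_scale l Hf) Hg)) => h _; rewrite /dq; ring.
Qed.

Lemma deriv_cst (c : C) x : is_deriv_within a b (fun _ => c) x 0.
Proof.
apply/derivE; apply: (tends_ext _ (tends_cst _ 0)) => h _; by rewrite /dq subrr mul0r.
Qed.

Lemma deriv_mul f g x Lf Lg : is_deriv_within a b f x Lf -> is_deriv_within a b g x Lg ->
  is_deriv_within a b (fun y => f y * g y) x (Lf * g x + f x * Lg).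
Proof.
move=> Hf0 Hg0; have /contE cg := deriv_cont Hg0.
move: Hf0 Hg0 => /derivE Hf /derivE Hg; apply/derivE.
have cg' : tends (Pd x) (fun h => g (x + h)) (g x).
  by apply: tends_sub cg => h [].
apply: (tends_ext _ (tends_add (tends_mul Hf cg') (tends_scale (f x) Hg))) => h _.
rewrite /dq; ring.
Qed.

Lemma deriv_inv f x L : in_ab a b x -> (forall y, in_ab a b y -> f y != 0) ->
  is_deriv_within a b f x L ->
  is_deriv_within a b (fun y => (f y)^-1) x (- L * ((f x)^-1 * (f x)^-1)).
Proof.
move=> xab f0 Hf0; have /contE cf := deriv_cont Hf0.
move: Hf0 => /derivE Hf; apply/derivE.
have cf' : tends (Pd x) (fun h => f (x + h)) (f x).
  by apply: tends_sub cf => h [].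
have ti := tends_inv (f0 _ xab) cf'.
have t := tends_mul (tends_scale (-1) Hf) (tends_scale ((f x)^-1) ti).
rewrite mulN1r in t.
apply: (tends_ext _ t) => h [h0 hab].
have f1 := f0 _ hab; have f2 := f0 _ xab.
have hC : h%:C != 0 by apply/eqP => /complexI /eqP; rewrite (negbTE h0).
by rewrite /dq; field; rewrite hC f1 f2.
Qed.

End Deriv.

Section CmTheory.
Variable R : realType.
Local Notation C := R[i].
Variables a b : R.
Hypothesis ab : a < b.
Local Notation D := (dwithin a b).
Local Notation nd := (nderiv a b).
Local Notation I := (in_ab a b).
Local Notation isd := (is_deriv_within a b).
Local Notation cont := (cont_within a b).

Definition abeq (f g : R -> C) := forall x, I x -> f x = g x.

Lemma abeq_sym f g : abeq f g -> abeq g f.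
Proof. by move=> H x xI; rewrite H. Qed.

Lemma deriv_loc f g x L : abeq f g -> I x -> isd f x L -> isd g x L.
Proof.
move=> fg xI H eps eps0; have [d d0 Hd] := H eps eps0; exists d => // h h0 hd hI.
by rewrite -!fg //; apply: Hd.
Qed.

Lemma cont_loc f g x : abeq f g -> I x -> cont f x -> cont g x.
Proof.
move=> fg xI H eps eps0; have [d d0 Hd] := H eps eps0; exists d => // y yI yd.
by rewrite -!fg //; apply: Hd.
Qed.

Lemma D_loc f g : abeq f g -> abeq (D f) (D g).
Proof.
move=> fg x xI; rewrite /dwithin; congr xget; apply: funext => L; apply: propext.
by split; apply: deriv_loc => //; apply: abeq_sym.
Qed.

Lemma nd_loc k f g : abeq f g -> abeq (nd k f) (nd k g).
Proof.
move=> fg; elim: k => [|k IH] x xI; first by rewrite /nderiv /= fg.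
by rewrite /nderiv /=; apply: D_loc.
Qed.

Lemma ndS k f : nd k.+1 f = D (nd k f).
Proof. by []. Qed.

Lemma ndSr k f : nd k.+1 f = nd k (D f).
Proof. by rewrite /nderiv iterSr. Qed.

Lemma Cm_loc m f g : abeq f g -> Cm a b m f -> Cm a b m g.
Proof.
move=> fg H k km x xI; have [H1 H2] := H k km x xI.
have e := nd_loc k fg; split.
  by move=> km'; have [L HL] := H1 km'; exists L; apply: deriv_loc HL.
exact: cont_loc H2.
Qed.

Lemma Cm_le m k f : (k <= m)%N -> Cm a b m f -> Cm a b k f.
Proof.
move=> km H j jk x xI; have [H1 H2] := H j (leq_trans jk km) x xI; split => //.
by move=> jk'; apply: H1; apply: leq_trans jk' km.
Qed.

Lemma Cm0 f : Cm a b 0 f <-> (forall x, I x -> cont f x).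
Proof.
split; first by move=> H x xI; have [] := H 0%N (leqnn _) x xI.
by move=> H k; rewrite leqn0 => /eqP -> x xI; split => //; apply: H.
Qed.

Lemma CmS m f : Cm a b m.+1 f <->
  [/\ (forall x, I x -> exists L, isd f x L), (forall x, I x -> cont f x)
    & Cm a b m (D f)].
Proof.
split.
  move=> H; split.
  - by move=> x xI; have [H1 _] := H 0%N isT x xI; apply: H1.
  - by move=> x xI; have [_ H2] := H 0%N isT x xI.
  move=> k km x xI; have [H1 H2] := H k.+1 km x xI.
  by rewrite -!ndSr; split.
case=> H1 H2 H3 [|k] km x xI.
  by split; [move=> _; apply: H1 | apply: H2].
have [K1 K2] := H3 k km x xI; rewrite ndSr; split => //.
Qed.

Lemma isdD m f x : Cm a b m.+1 f -> I x -> isd f x (D f x).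
Proof.
move=> /CmS [H _ _] xI; have [L HL] := H x xI.
by rewrite (Dval ab xI HL).
Qed.

Lemma cont_lin f g l x : cont f x -> cont g x -> cont (fun y => l * f y + g y) x.
Proof.
move=> /contE Hf /contE Hg; apply/contE; exact: tends_add (tends_scale l Hf) Hg.
Qed.

Lemma cont_mul f g x : cont f x -> cont g x -> cont (fun y => f y * g y) x.
Proof.
move=> /contE Hf /contE Hg; apply/contE; exact: tends_mul Hf Hg.
Qed.

Lemma cont_inv f x : I x -> (forall y, I y -> f y != 0) -> cont f x ->
  cont (fun y => (f y)^-1) x.
Proof.
move=> xI f0 /contE Hf; apply/contE; exact: tends_inv (f0 x xI) Hf.
Qed.

Lemma Cm_cst m (c : C) : Cm a b m (fun _ => c).
Proof.
elim: m c => [|m IH] c.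
  by apply/Cm0 => x _; apply: deriv_cont (deriv_cst _ _ _ _).
apply/CmS; split.
- by move=> x _; exists 0; apply: deriv_cst.
- by move=> x _; apply: deriv_cont (deriv_cst _ _ _ _).
apply: (Cm_loc _ (IH 0)) => x xI; rewrite (Dval ab xI (deriv_cst _ _ _ _)) //.
Qed.

Lemma nd_cst0 k x : I x -> nd k (fun _ => 0) x = 0.
Proof.
elim: k x => [|k IH] x xI //.
have H : abeq (nd k (fun _ => 0)) (fun _ => 0) by move=> y yI; apply: IH.
rewrite ndS (D_loc H xI).
exact: (Dval ab xI (deriv_cst _ _ _ _)).
Qed.

Lemma Cm_lin m f g l : Cm a b m f -> Cm a b m g -> Cm a b m (fun y => l * f y + g y).
Proof.
elim: m f g => [|m IH] f g.
  by move=> /Cm0 Hf /Cm0 Hg; apply/Cm0 => x xI; apply: cont_lin; [exact: (Hf x xI)|exact: (Hg x xI)].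
move=> Hf Hg; have [F1 F2 F3] := (iffLR (CmS m f)) Hf; have [G1 G2 G3] := (iffLR (CmS m g)) Hg.
apply/CmS; split.
- by move=> x xI; exists (l * D f x + D g x); apply: deriv_lin; [exact: (isdD Hf xI)|exact: (isdD Hg xI)].
- by move=> x xI; apply: cont_lin; [exact: (F2 x xI)|exact: (G2 x xI)].
apply: (Cm_loc _ (IH _ _ F3 G3)) => x xI.
by rewrite (Dval ab xI (deriv_lin _ (isdD Hf xI) (isdD Hg xI))).
Qed.

Lemma nd_lin m k f g l x : Cm a b m f -> Cm a b m g -> (k <= m)%N -> I x ->
  nd k (fun y => l * f y + g y) x = l * nd k f x + nd k g x.
Proof.
elim: k m f g x => [|k IH] m f g x Hf Hg km xI //.
case: m Hf Hg km => // m Hf Hg km.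
have [F1 F2 F3] := (iffLR (CmS m f)) Hf; have [G1 G2 G3] := (iffLR (CmS m g)) Hg.
rewrite !ndSr -(IH m _ _ _ F3 G3 km xI); apply: nd_loc => // y yI.
by rewrite (Dval ab yI (deriv_lin _ (isdD Hf yI) (isdD Hg yI))).
Qed.

Lemma Cm_mul m f g : Cm a b m f -> Cm a b m g -> Cm a b m (fun y => f y * g y).
Proof.
elim: m f g => [|m IH] f g.
  by move=> /Cm0 Hf /Cm0 Hg; apply/Cm0 => x xI; apply: cont_mul; [exact: (Hf x xI)|exact: (Hg x xI)].
move=> Hf Hg; have [F1 F2 F3] := (iffLR (CmS m f)) Hf; have [G1 G2 G3] := (iffLR (CmS m g)) Hg.
apply/CmS; split.
- by move=> x xI; eexists; apply: deriv_mul; [exact: (isdD Hf xI)|exact: (isdD Hg xI)].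
- by move=> x xI; apply: cont_mul; [exact: (F2 x xI)|exact: (G2 x xI)].
have Hf' := Cm_le (leqnSn m) Hf; have Hg' := Cm_le (leqnSn m) Hg.
have := Cm_lin 1 (IH _ _ F3 Hg') (IH _ _ Hf' G3).
apply: Cm_loc => x xI.
by rewrite (Dval ab xI (deriv_mul (isdD Hf xI) (isdD Hg xI))) mul1r.
Qed.

Lemma Cm_inv m f : (forall y, I y -> f y != 0) -> Cm a b m f -> Cm a b m (fun y => (f y)^-1).
Proof.
move=> f0; elim: m => [|m IH].
  by move=> /Cm0 Hf; apply/Cm0 => x xI; apply: cont_inv => //; exact: (Hf x xI).
move=> Hf; have [F1 F2 F3] := (iffLR (CmS m f)) Hf.
have Hf' := Cm_le (leqnSn m) Hf.
apply/CmS; split.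
- by move=> x xI; eexists; apply: deriv_inv => //; exact: (isdD Hf xI).
- by move=> x xI; apply: cont_inv => //; exact: (F2 x xI).
have := Cm_lin (-1) (Cm_mul F3 (Cm_mul (IH Hf') (IH Hf'))) (@Cm_cst m 0).
apply: Cm_loc => x xI.
by rewrite (Dval ab xI (deriv_inv xI f0 (isdD Hf xI))) addr0 mulNr mul1r mulNr.
Qed.

End CmTheory.

Section Combi.
Variable R : realType.
Local Notation C := R[i].
Variables a b : R.
Hypothesis ab : a < b.
Local Notation D := (dwithin a b).
Local Notation nd := (nderiv a b).
Local Notation I := (in_ab a b).
Local Notation isd := (is_deriv_within a b).
Local Notation abeq := (abeq a b).

Lemma sum_recr N (lam : nat -> C) (F : nat -> R -> C) :
  (fun y => \sum_(i < N.+1) lam i * F i y) =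
  (fun y => lam N * F N y + \sum_(i < N) lam i * F i y).
Proof. by apply: funext => y; rewrite big_ord_recr /= addrC. Qed.

Lemma Cm_sum m N (lam : nat -> C) (F : nat -> R -> C) :
  (forall i, (i < N)%N -> Cm a b m (F i)) ->
  Cm a b m (fun y => \sum_(i < N) lam i * F i y).
Proof.
elim: N => [|N IH] H.
  by apply: (Cm_loc (f := fun _ => 0)) => [x _|]; rewrite ?big_ord0 //; apply: (Cm_cst ab).
rewrite sum_recr; apply: (Cm_lin ab); first exact: H.
by apply: IH => i iN; apply: H; apply: ltnW.
Qed.

Lemma nd_sum m N (lam : nat -> C) (F : nat -> R -> C) k x :
  (forall i, (i < N)%N -> Cm a b m (F i)) -> (k <= m)%N -> I x ->
  nd k (fun y => \sum_(i < N) lam i * F i y) x = \sum_(i < N) lam i * nd k (F i) x.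
Proof.
move=> H km xI; elim: N H => [|N IH] H.
  have E : abeq (fun y => \sum_(i < 0) lam i * F i y) (fun _ => 0) by move=> y _; rewrite big_ord0.
  by rewrite big_ord0 (nd_loc _ E xI) (nd_cst0 ab k xI).
rewrite sum_recr (nd_lin ab _ _ _ km xI); first last.
- by apply: Cm_sum => i iN; apply: H; apply: ltnW.
- exact: H.
by rewrite IH ?big_ord_recr /= 1?addrC // => i iN; apply: H; apply: ltnW.
Qed.

Lemma nd_mul_zero c k : forall m u v, Cm a b m u -> Cm a b m v -> (k <= m)%N -> I c ->
  (forall j, (j < k)%N -> nd j u c = 0) ->
  (forall j, (j < k)%N -> nd j (fun y => u y * v y) c = 0) /\
  nd k (fun y => u y * v y) c = nd k u c * v c.
Proof.
elim: k => [|k IH] m u v Hu Hv km cI Z; first by split.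
case: m Hu Hv km => // m Hu Hv km.
have [U1 U2 U3] := (iffLR (@CmS _ _ _ m u)) Hu; have [V1 V2 V3] := (iffLR (@CmS _ _ _ m v)) Hv.
have Hu' := Cm_le (leqnSn m) Hu; have Hv' := Cm_le (leqnSn m) Hv.
have eqD : abeq (D (fun y => u y * v y)) (fun y => 1 * (D u y * v y) + u y * D v y).
  by move=> y yI; rewrite (Dval ab yI (deriv_mul (isdD ab Hu yI) (isdD ab Hv yI))) mul1r.
have C1 := Cm_mul ab U3 Hv'; have C2 := Cm_mul ab Hu' V3.
have ZD : forall j, (j < k)%N -> nd j (D u) c = 0 by move=> j jk; rewrite -ndSr Z.
have [A1 A2] := IH m _ _ U3 Hv' km cI ZD.
have Z' : forall j, (j < k)%N -> nd j u c = 0 by move=> j jk; rewrite Z // ltnW.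
have [B1 B2] := IH m _ _ Hu' V3 km cI Z'.
have key : forall j, (j <= m)%N -> nd j.+1 (fun y => u y * v y) c =
    nd j (fun y => D u y * v y) c + nd j (fun y => u y * D v y) c.
  move=> j jm; rewrite ndSr (nd_loc _ eqD cI) (nd_lin ab _ _ _ jm cI) // mul1r //.
split.
  case=> [_|j jk]; first by have := Z 0%N isT; rewrite /nderiv /= => ->; rewrite mul0r.
  by rewrite key ?A1 ?B1 ?addr0 //; apply: leq_trans (ltnW jk) km.
by rewrite key // A2 B2 (Z k) // mul0r addr0 -ndSr.
Qed.

Lemma coef_zero m N (o : nat -> nat) (lam : nat -> C) (F : nat -> R -> C) G c J :
  I c -> (forall i, (i < N)%N -> Cm a b m (F i)) -> (forall i, (i < N)%N -> (o i <= m)%N) ->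
  (forall i j, (i < N)%N -> (j < N)%N -> o i = o j -> i = j) ->
  (forall i, (i < N)%N -> zero_order a b (F i) c (o i)) ->
  abeq G (fun y => \sum_(i < N) lam i * F i y) ->
  (forall j, (j < J)%N -> nd j G c = 0) ->
  forall i, (i < N)%N -> (o i < J)%N -> lam i = 0.
Proof.
move=> cI HF om oinj zo eG ZG.
suff H : forall t i, (i < N)%N -> (o i < t)%N -> (t <= J)%N -> lam i = 0.
  by move=> i iN oJ; apply: (H J).
elim=> [//|t IH] i iN oit tJ.
have [oi|oi] := ltnP (o i) t; first by apply: IH => //; apply: ltnW.
have eo : o i = t by apply/eqP; rewrite eqn_leq oi -ltnS oit.
have tm : (t <= m)%N by rewrite -eo om.
have := ZG t tJ; rewrite (nd_loc _ eG cI) (nd_sum lam HF tm cI).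
rewrite (bigD1 (Ordinal iN)) //= big1 ?addr0; first last.
  move=> [i' i'N] /= ne; have [lt|gt|eq] := ltngtP (o i') t.
  - by rewrite (IH i') ?mul0r // ltnW.
  - by have [Z _] := zo i' i'N; rewrite Z // mulr0.
  - exfalso; move: ne; apply/negP; rewrite negbK; apply/eqP; apply: val_inj => /=.
    by apply: oinj => //; rewrite eq eo.
move/eqP; rewrite mulf_eq0 => /orP[/eqP //|].
by have [_] := zo i iN; rewrite eo => /negbTE ->.
Qed.

Lemma span_inv N (v w : 'I_N -> R -> C) (M : 'M[C]_N) :
  (forall i x, I x -> v i x = \sum_j M i j * w j x) ->
  (forall lam : 'I_N -> C, (forall x, I x -> \sum_i lam i * v i x = 0) -> forall i, lam i = 0) ->
  forall j x, I x -> w j x = \sum_i (invmx M) j i * v i x.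
Proof.
move=> Hv Hind.
have Mu : M \in unitmx.
  rewrite -row_free_unit -kermx_eq0; apply/negPn/negP => nz.
  have [i ri] : exists i, row i (kermx M) != 0.
    apply/existsP/negP => /existsP H; apply/negP: nz; rewrite negbK; apply/eqP.
    apply/row_matrixP => i; rewrite row0; apply/eqP/negPn/negP => hi.
    by apply: H; exists i.
  have L0 := Hind (fun j => kermx M i j).
  suff : row i (kermx M) = 0 by move/eqP; rewrite (negbTE ri).
  suff H : forall x, I x -> \sum_k kermx M i k * v k x = 0.
    by apply/rowP => j; have := L0 H j; rewrite !mxE => ->.
  move=> x xI.
  under eq_bigr => k _ do rewrite Hv // big_distrr /=.
  rewrite exchange_big /=; apply: big1 => l _.
  have E : (kermx M *m M) i l = 0 by rewrite mulmx_ker mxE.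
  move: E; rewrite [X in X = _]mxE => E.
  transitivity ((\sum_k kermx M i k * M k l) * w l x); last by rewrite E mul0r.
  by rewrite big_distrl /=; apply: eq_bigr => k _; rewrite mulrA.
move=> j x xI.
transitivity (\sum_k (invmx M *m M) j k * w k x).
  rewrite mulVmx // (bigD1 j) //= big1 ?addr0; first by rewrite mxE eqxx mul1r.
  by move=> k kj; rewrite mxE eq_sym (negbTE kj) mul0r.
under eq_bigr => k _ do rewrite mxE big_distrl /=.
rewrite exchange_big /=; apply: eq_bigr => i _; rewrite Hv // big_distrr /=.
by apply: eq_bigr => k _; rewrite mulrA.
Qed.

End Combi.

Lemma sum_one (R : realType) (N : nat) (F : nat -> R[i]) l : (l < N)%N ->
  (forall k, (k < N)%N -> k != l -> F k = 0) -> \sum_(k < N) F k = F l.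
Proof.
move=> lN H; rewrite (bigD1 (Ordinal lN)) // big1 => [|k kl]; first exact: addr0.
by apply: H => //; apply: contra kl => /eqP kl'; apply/eqP; apply: val_inj.
Qed.

Lemma sum_two (R : realType) (N : nat) (F : nat -> R[i]) l : (l.+1 < N)%N ->
  (forall k, (k < N)%N -> k != l -> k != l.+1 -> F k = 0) -> \sum_(k < N) F k = F l + F l.+1.
Proof.
move=> lN H; have lN' : (l < N)%N by apply: ltnW.
rewrite (bigD1 (Ordinal lN')) // (bigD1 (Ordinal lN)) //.
set S := \big[_/_]_(i | _) _.
have -> : S = 0.
  by apply: big1 => k /andP[/andP[_ k1] k2]; apply: H.
  by rewrite /= addr0.
by rewrite /= -val_eqE /= gtn_eqF.
Qed.


Section Main.
Variable R : realType.
Local Notation C := R[i].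
Variables (rc : bool) (n : nat) (a b : R) (U : (R -> C) -> Prop) (p q : nat -> R -> C)
  (f0 : R -> C).
Hypotheses (n0 : (0 < n)%N) (ab : a < b) (HU : subspaceCm rc a b n U)
  (Hdim : has_dim rc a b U n.+1) (Bp : bernstein_basis a b n U p) (Uf0 : U f0)
  (f0pos : forall x, in_ab a b x -> 0 < f0 x)
  (Bq : bernstein_basis a b n.-1 (Dspace a b f0 U) q).
Local Notation D := (dwithin a b).
Local Notation nd := (nderiv a b).
Local Notation I := (in_ab a b).
Local Notation abeq := (abeq a b).

Lemma aI : I a. Proof. by rewrite /in_ab lexx ltW. Qed.
Lemma bI : I b. Proof. by rewrite /in_ab lexx ltW. Qed.

Lemma f0nz y : I y -> f0 y != 0.
Proof. by move=> yI; rewrite gt_eqF // f0pos. Qed.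

Lemma UCm f : U f -> Cm a b n f.
Proof. by case: HU => _ [_ [H _]]; apply: H. Qed.

Lemma Cp k : (k <= n)%N -> Cm a b n (p k).
Proof. by move=> kn; have [H _] := Bp kn; apply: UCm. Qed.

Definition r := fun y => (f0 y)^-1.
Definition h k := fun y => p k y * r y.
Definition g k := D (h k).

Lemma Cr : Cm a b n r.
Proof. exact: (Cm_inv ab f0nz (UCm Uf0)). Qed.

Lemma Ch k : (k <= n)%N -> Cm a b n (h k).
Proof. by move=> kn; apply: (Cm_mul ab (Cp kn) Cr). Qed.

Lemma Cg k : (k <= n)%N -> Cm a b n.-1 (g k).
Proof.
move=> kn; have := Ch kn; rewrite -(prednK n0) => /CmS [_ _ H]; exact: H.
Qed.

Lemma p_indep (lam : nat -> C) :
  (forall x, I x -> \sum_(i < n.+1) lam i * p i x = 0) -> forall i, (i <= n)%N -> lam i = 0.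
Proof.
move=> H i iN.
have eG : abeq (fun y => \sum_(i < n.+1) lam i * p i y) (fun y => \sum_(i < n.+1) lam i * p i y) by [].
apply: (coef_zero (m := n) (o := id) (J := n.+1) ab aI _ _ _ _ eG) => //.
all: try (by move=> k kn; apply: Cp).
all: try (by move=> k kn; case: (Bp kn) => _ []).
all: try (by []).
move=> j jn.
have E : abeq (fun y => \sum_(i < n.+1) lam i * p i y) (fun _ => 0) by [].
by rewrite (nd_loc _ E aI) (nd_cst0 ab _ aI).
Qed.

Lemma spanU f : U f -> exists mu : nat -> C, abeq f (fun y => \sum_(i < n.+1) mu i * p i y).
Proof.
move=> Uf; case: Hdim => e [eU [_ espan]].
have [L HL] : {L : 'I_n.+1 -> 'I_n.+1 -> C & forall (i : 'I_n.+1) x, I x -> p i x = \sum_j L i j * e j x}.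
  apply: (@choice _ _ (fun (i : 'I_n.+1) (l : 'I_n.+1 -> C) => forall x, I x -> p i x = \sum_j l j * e j x)) => i.
  have [pU _] := Bp (ltn_ord i).
  by have [l _ Hl] := espan _ pU; exists l.
pose M := \matrix_(i, j) L i j.
have Hinv := span_inv (a := a) (b := b) (v := fun i : 'I_n.+1 => p i) (w := e) (M := M).
have {}Hinv : forall j x, I x -> e j x = \sum_i (invmx M) j i * p i x.
  apply: Hinv.
    by move=> i x xI; rewrite HL //; apply: eq_bigr => j _; rewrite mxE.
  move=> lam Hl i.
  have := p_indep (lam := fun k => lam (inord k)) _ (ltn_ord i); rewrite inord_val; apply.
  by move=> x xI; rewrite -[RHS](Hl x xI); apply: eq_bigr => k _; rewrite inord_val.
have [l _ Hl] := espan f Uf.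
exists (fun i => \sum_j l j * invmx M j (inord i)) => x xI.
rewrite Hl //; under eq_bigr => j _ do rewrite Hinv // big_distrr /=.
rewrite exchange_big /=; apply: eq_bigr => i _; rewrite big_distrl /=.
by apply: eq_bigr => j _; rewrite inord_val mulrA.
Qed.

Lemma p0a : p 0 a != 0.
Proof. by have [_ [[_ H] _]] := Bp (leq0n n). Qed.

Lemma pa0 i : (0 < i <= n)%N -> p i a = 0.
Proof. by case/andP=> i0 iN; have [_ [[H _] _]] := Bp iN; apply: (H 0%N). Qed.

Lemma sum_h (mu : nat -> C) f : abeq f (fun y => \sum_(i < n.+1) mu i * p i y) ->
  abeq (fun y => f y / f0 y) (fun y => \sum_(i < n.+1) mu i * h i y).
Proof.
move=> Hf y yI; rewrite Hf // big_distrl /=; apply: eq_bigr => i _.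
by rewrite /h /r mulrA.
Qed.

Lemma D_sum_h (mu : nat -> C) x : I x ->
  D (fun y => \sum_(i < n.+1) mu i * h i y) x = \sum_(i < n.+1) mu i * g i x.
Proof.
move=> xI; have := @nd_sum R a b ab n n.+1 mu h 1%N x.
by apply => //; move=> i iN; apply: Ch.
Qed.

Lemma q_span l : (l < n)%N -> exists mu : nat -> C,
  abeq (q l) (fun y => \sum_(k < n.+1) mu k * g k y).
Proof.
move=> ln; have ln' : (l <= n.-1)%N by rewrite -ltnS prednK.
have [[f Uf Hf] _] := Bq ln'.
have [mu Hmu] := spanU Uf; exists mu => x xI.
by rewrite Hf // (D_loc (sum_h Hmu) xI) D_sum_h.
Qed.

Section WithAlpha.
Variable alpha : nat -> C.
Hypothesis Ha : abeq f0 (fun y => \sum_(i < n.+1) alpha i * p i y).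

Lemma alpha0 : alpha 0%N = f0 a / p 0%N a.
Proof.
rewrite (Ha aI) big_ord_recl /= big1 ?addr0 ?mulfK ?p0a //.
by move=> i _; rewrite pa0 ?mulr0 //= ltn_ord.
Qed.

Lemma alpha0nz : alpha 0%N != 0.
Proof. by rewrite alpha0 mulf_neq0 ?invr_eq0 ?p0a // f0nz //; exact: aI. Qed.

Lemma rel_g x : I x -> \sum_(k < n.+1) alpha k * g k x = 0.
Proof.
move=> xI; rewrite -D_sum_h //.
have E : abeq (fun y => \sum_(i < n.+1) alpha i * h i y) (fun _ => 1).
  move=> y yI; rewrite -(sum_h Ha) // mulfV // f0nz //.
by rewrite (D_loc E xI) (Dval ab xI (deriv_cst _ _ _ _)).
Qed.

Lemma q_span2 l : (l < n)%N -> exists M : nat -> C,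
  abeq (q l) (fun y => \sum_(j < n) M j * g j.+1 y).
Proof.
move=> ln; have [mu Hmu] := q_span ln.
exists (fun j => mu j.+1 - mu 0%N * alpha j.+1 / alpha 0%N) => x xI.
have R0 := rel_g xI; rewrite big_ord_recl /= in R0.
set S := \sum_(j < n) alpha j.+1 * g j.+1 x in R0.
have a0 := alpha0nz.
have -> : \sum_(j < n) (mu j.+1 - mu 0%N * alpha j.+1 / alpha 0%N) * g j.+1 x =
    \sum_(j < n) mu j.+1 * g j.+1 x - mu 0%N / alpha 0%N * S.
  rewrite /S big_distrr -sumrB; apply: eq_bigr => j _ /=; ring.
rewrite (Hmu x xI) big_ord_recl /=.
have -> : g 0%N x = - S / alpha 0%N.
  have E : alpha 0%N * g 0%N x = - S by apply/eqP; rewrite -addr_eq0; apply/eqP.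
  by rewrite -E; field.
by field.
Qed.

Lemma Cq l : (l < n)%N -> Cm a b n.-1 (q l).
Proof.
move=> ln; have [M HM] := q_span2 ln.
have CS : Cm a b n.-1 (fun y => \sum_(j < n) M j * g j.+1 y).
  exact: (Cm_sum ab M (F := fun j => g j.+1) (fun j jn => Cg jn)).
exact: (Cm_loc (abeq_sym HM) CS).
Qed.

Lemma zq l : (l < n)%N -> zero_order a b (q l) a l /\ zero_order a b (q l) b (n.-1 - l).
Proof.
move=> ln; have ln' : (l <= n.-1)%N by rewrite -ltnS prednK.
by have [_ [H1 H2]] := Bq ln'.
Qed.

Lemma q_indep (lam : nat -> C) :
  (forall x, I x -> \sum_(l < n) lam l * q l x = 0) -> forall l, (l < n)%N -> lam l = 0.
Proof.
move=> H l ln.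
have eG : abeq (fun y => \sum_(i < n) lam i * q i y) (fun y => \sum_(i < n) lam i * q i y) by [].
apply: (coef_zero (m := n.-1) (o := id) (J := n) ab aI _ _ _ _ eG) => //.
all: try (by move=> k kn; apply: Cq).
all: try (by move=> k kn; case: (zq kn)).
all: try (by move=> k kn; rewrite -ltnS prednK).
all: try (by []).
move=> j jn.
have E : abeq (fun y => \sum_(i < n) lam i * q i y) (fun _ => 0) by [].
by rewrite (nd_loc _ E aI) (nd_cst0 ab _ aI).
Qed.

Lemma span_g1 : exists Mi : 'I_n -> 'I_n -> C,
  forall (j : 'I_n) x, I x -> g j.+1 x = \sum_(l < n) Mi j l * q l x.
Proof.
have [L HL] : {L : 'I_n -> nat -> C & forall (l : 'I_n) x, I x ->
    q l x = \sum_(j < n) L l j * g j.+1 x}.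
  apply: (@choice _ _ (fun (l : 'I_n) (L : nat -> C) => forall x, I x ->
    q l x = \sum_(j < n) L j * g j.+1 x)) => l.
  by have [M HM] := q_span2 (ltn_ord l); exists M.
pose M : 'M[C]_n := \matrix_(i, j) L i (nat_of_ord j).
have Hinv := span_inv (a := a) (b := b) (v := fun i : 'I_n => q i)
  (w := fun j : 'I_n => g j.+1) (M := M).
exists (invmx M); apply: Hinv.
  by move=> i x xI; rewrite HL //; apply: eq_bigr => j _; rewrite mxE.
move=> lam Hl i.
have := q_indep (lam := fun k => lam (insubd i k)) _ (ltn_ord i); rewrite valKd; apply.
by move=> x xI; rewrite -[RHS](Hl x xI); apply: eq_bigr => k _; rewrite valKd.
Qed.

Lemma g_span k : (k <= n)%N -> exists Lam : nat -> C,
  abeq (g k) (fun y => \sum_(l < n) Lam l * q l y).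
Proof.
move=> kn; have [Mi HMi] := span_g1.
suff H : forall nu : nat -> C, exists Lam : nat -> C, forall x, I x ->
    \sum_(j < n) nu j * g j.+1 x = \sum_(l < n) Lam l * q l x.
  case: k kn => [|k] kn.
    have [Lam HL] := H (fun j => - alpha j.+1 / alpha 0%N); exists Lam => x xI.
    rewrite -HL //; have R0 := rel_g xI; rewrite big_ord_recl /= in R0.
    have E : alpha 0%N * g 0%N x = - \sum_(j < n) alpha j.+1 * g j.+1 x.
      by apply/eqP; rewrite -addr_eq0; apply/eqP.
    have a0 := alpha0nz.
    transitivity (- (\sum_(j < n) alpha j.+1 * g j.+1 x) / alpha 0%N).
      by rewrite -E; field.
    by rewrite -sumrN big_distrl /=; apply: eq_bigr => j _; field.
  have [Lam HL] := H (fun j => (j == k)%:R); exists Lam => x xI.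
  rewrite -HL // (sum_one (F := fun j => (j == k)%:R * g j.+1 x) (l := k)) ?eqxx ?mul1r // => j _ jk.
  by rewrite (negbTE jk) mul0r.
move=> nu; exists (fun l => \sum_(j < n) nu j * Mi j (insubd (Ordinal n0) l)) => x xI.
under eq_bigr => j _ do rewrite HMi // big_distrr /=.
rewrite exchange_big /=; apply: eq_bigr => l _; rewrite big_distrl /=.
by apply: eq_bigr => j _; rewrite valKd mulrA.
Qed.

Lemma gA k : (k <= n)%N -> (forall j, (j.+1 < k)%N -> nd j (g k) a = 0) /\
  (forall k', k = k'.+1 -> nd k' (g k) a = nd k (p k) a * r a).
Proof.
move=> kn; have [_ [[Za _] _]] := Bp kn.
have [A1 A2] := nd_mul_zero ab (Cp kn) Cr kn aI Za.
split; first by move=> j jk; rewrite /g -ndSr; apply: A1.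
by move=> k' ek; rewrite /g -ndSr -ek; apply: A2.
Qed.

Lemma gB k : (k <= n)%N -> (forall j, (j.+1 < n - k)%N -> nd j (g k) b = 0) /\
  ((k < n)%N -> nd (n.-1 - k) (g k) b = nd (n - k) (p k) b * r b).
Proof.
move=> kn; have [_ [_ [Zb _]]] := Bp kn.
have [A1 A2] := nd_mul_zero ab (Cp kn) Cr (leq_subr k n) bI Zb.
split; first by move=> j jk; rewrite /g -ndSr; apply: A1.
move=> kn'; rewrite /g -ndSr.
have -> : (n.-1 - k).+1 = (n - k)%N by rewrite -subSn ?prednK // -ltnS prednK.
by apply: A2.
Qed.

Definition cc k := nd k (p k) a / (f0 a * nd k.-1 (q k.-1) a).
Definition dd k := nd (n - k) (p k) b / (f0 b * nd (n.-1 - k) (q k) b).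

Section WithLam.
Variable Lam : nat -> nat -> C.
Hypothesis HLam : forall k, (k <= n)%N -> abeq (g k) (fun y => \sum_(l < n) Lam k l * q l y).

Lemma LamA k l : (k <= n)%N -> (l < n)%N -> (l.+1 < k)%N -> Lam k l = 0.
Proof.
move=> kn ln lk.
apply: (coef_zero (m := n.-1) (o := id) (J := k.-1) ab aI _ _ _ _ (HLam kn)) => //.
all: try (by move=> i iN; apply: Cq).
all: try (by move=> i iN; case: (zq iN)).
all: try (by move=> i iN; rewrite -ltnS prednK).
all: try (by []).
- by move=> j jk; have [A1 _] := gA kn; apply: A1; lia.
- by lia.
Qed.

Lemma LamB k l : (k <= n)%N -> (l < n)%N -> (k < l)%N -> Lam k l = 0.
Proof.
move=> kn ln kl.
apply: (coef_zero (m := n.-1) (o := fun i => (n.-1 - i)%N) (J := (n.-1 - k)%N) ab bI _ _ _ _ (HLam kn)) => //.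
- by move=> i iN; apply: Cq.
- by move=> i iN; apply: leq_subr.
- by move=> i j iN jN; rewrite -(prednK n0) in iN jN; lia.
- by move=> i iN; case: (zq iN).
- move=> j jk; have [A1 _] := gB kn; apply: A1.
  by rewrite -(prednK n0) in jk *; lia.
by rewrite -(prednK n0) in ln *; lia.
Qed.

Lemma LamC k : (0 < k <= n)%N -> Lam k k.-1 = cc k.
Proof.
case/andP=> k0 kn; have k1n : (k.-1 < n)%N by rewrite prednK.
have [A1 A2] := gA kn.
have E := A2 k.-1 (esym (prednK k0)).
rewrite (nd_loc _ (HLam kn) aI) in E.
rewrite (nd_sum ab (m := n.-1) (Lam k) (F := q) _ _ aI) in E; first last.
- by rewrite -ltnS !prednK.
- by move=> i iN; apply: Cq.
rewrite (sum_one (F := fun l => Lam k l * nd k.-1 (q l) a) (l := k.-1)) // in E; last first.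
  move=> l ln lk; have [lt|gt|eq] := ltngtP l k.-1.
  - by rewrite LamA ?mul0r // -(prednK k0) ltnS.
  - by have [[Z _] _] := zq ln; rewrite Z ?mulr0.
  - by rewrite eq eqxx in lk.
have [[_ Q0] _] := zq k1n.
have P0 : f0 a != 0 by apply: f0nz; apply: aI.
rewrite /cc; apply: (mulIf Q0); rewrite E /r; field.
by rewrite Q0 P0.
Qed.

Lemma LamD k : (k < n)%N -> Lam k k = dd k.
Proof.
move=> kn; have kn' := ltnW kn.
have [B1 B2] := gB kn'.
have E := B2 kn.
rewrite (nd_loc _ (HLam kn') bI) in E.
rewrite (nd_sum ab (m := n.-1) (Lam k) (F := q) _ _ bI) in E; first last.
- exact: leq_subr.
- by move=> i iN; apply: Cq.
rewrite (sum_one (F := fun l => Lam k l * nd (n.-1 - k) (q l) b) (l := k)) // in E; last first.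
  move=> l ln lk; have [lt|gt|eq] := ltngtP l k.
  - have [_ [Z _]] := zq ln; rewrite Z ?mulr0 //.
    by rewrite -(prednK n0) in ln kn *; lia.
  - by rewrite LamB ?mul0r.
  - by rewrite eq eqxx in lk.
have [_ [_ Q0]] := zq kn.
have P0 : f0 b != 0 by apply: f0nz; apply: bI.
rewrite /dd; apply: (mulIf Q0); rewrite E /r; field.
by rewrite Q0 P0.
Qed.

Lemma rel_coef l : (l < n)%N -> alpha l * Lam l l + alpha l.+1 * Lam l.+1 l = 0.
Proof.
move=> ln.
have H := q_indep (lam := fun l => \sum_(k < n.+1) alpha k * Lam k l) _ ln.
rewrite (sum_two (F := fun k => alpha k * Lam k l) (l := l)) /= in H; first apply: H.
- move=> x xI; rewrite -[RHS](rel_g xI).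
  under eq_bigr => i _ do rewrite big_distrl /=.
  rewrite exchange_big /=; apply: eq_bigr => k _.
  rewrite (HLam (ltn_ord k)) // big_distrr /=; apply: eq_bigr => j _; by rewrite mulrA.
- by [].
move=> k kn k1 k2; have [lt|gt|eq] := ltngtP k l.
- by rewrite LamB ?mulr0.
- rewrite LamA ?mulr0 //; rewrite ltn_neqAle gt andbT eq_sym //.
- by rewrite eq eqxx in k1.
Qed.

End WithLam.

Lemma cc_nz k : (0 < k <= n)%N -> cc k != 0.
Proof.
case/andP=> k0 kn; have k1n : (k.-1 < n)%N by rewrite prednK.
have [[_ Q0] _] := zq k1n.
have [_ [[_ P0] _]] := Bp kn.
have F0 : f0 a != 0 by apply: f0nz; apply: aI.
by rewrite /cc mulf_neq0 // invr_eq0 mulf_neq0.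
Qed.

Lemma alpha_formula (Lam : nat -> nat -> C)
  (HLam : forall k, (k <= n)%N -> abeq (g k) (fun y => \sum_(l < n) Lam k l * q l y)) k :
  (k <= n)%N ->
  alpha k = (-1) ^+ k * ((\prod_(0 <= i < k) dd i) / (\prod_(1 <= i < k.+1) cc i)) * alpha 0%N.
Proof.
elim: k => [|k IH] kn.
  by rewrite !big_geq // expr0 divr1 !mul1r.
have kn' : (k < n)%N by [].
have R0 := rel_coef HLam kn'.
have k1 : (0 < k.+1 <= n)%N by rewrite kn.
have L2 : Lam k.+1 k = cc k.+1 := LamC HLam k1.
rewrite (LamD HLam kn') L2 in R0.
have c0 : cc k.+1 != 0 by apply: cc_nz.
have -> : alpha k.+1 = - alpha k * dd k / cc k.+1.
  by apply: (mulIf c0); rewrite divfK //; apply/eqP; rewrite mulNr -addr_eq0 addrC R0.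
rewrite IH; last exact: ltnW.
have e1 : \prod_(0 <= i < k.+1) dd i = (\prod_(0 <= i < k) dd i) * dd k :=
  big_nat_recr _ _ _ (leq0n k).
have e2 : \prod_(1 <= i < k.+2) cc i = (\prod_(1 <= i < k.+1) cc i) * cc k.+1 :=
  big_nat_recr _ _ _ (ltn0Sn k).
rewrite e1 e2 exprS.
move: (\prod_(0 <= i < k) dd i) (\prod_(1 <= i < k.+1) cc i) (dd k) (cc k.+1) (alpha 0%N) => P Q D1 C1 A.
rewrite invfM; ring.
Qed.

End WithAlpha.

Lemma main_formula x : I x ->
  f0 x = f0 a / p 0%N a * p 0%N x
    + \sum_(1 <= k < n.+1)
        (-1) ^+ k * ((\prod_(0 <= i < k) dd i) / (\prod_(1 <= i < k.+1) cc i))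
        * (f0 a / p 0%N a) * p k x.
Proof.
move=> xI; have [alpha Ha] := spanU Uf0.
have [Lam HLam] : {Lam : nat -> nat -> C & forall k, (k <= n)%N ->
    abeq (g k) (fun y => \sum_(l < n) Lam k l * q l y)}.
  apply: (@choice _ _ (fun k (L : nat -> C) => (k <= n)%N ->
    abeq (g k) (fun y => \sum_(l < n) L l * q l y))) => k.
  have [kn|nk] := leqP k n.
    by have [L HL] := g_span Ha kn; exists L.
  by exists (fun _ => 0).
rewrite (Ha x xI) big_ord_recl /= (alpha0 Ha); congr (_ + _).
rewrite big_add1 /= big_mkord; apply: eq_bigr => k _.
by rewrite (alpha_formula Ha HLam (ltn_ord k)) (alpha0 Ha).
Qed.

End Main.

Unset Implicit Arguments.

Theorem theorem4 (R : realType) (rc : bool) (n : nat) (a b : R)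
  (U : (R -> R[i]) -> Prop) (p q : nat -> R -> R[i]) (f0 : R -> R[i]) :
  (0 < n)%N -> a < b ->
  subspaceCm rc a b n U -> has_dim rc a b U n.+1 ->
  bernstein_basis a b n U p ->
  U f0 -> (forall x, in_ab a b x -> 0 < f0 x) ->
  bernstein_basis a b n.-1 (Dspace a b f0 U) q ->
  let c := fun k : nat =>
    nderiv a b k (p k) a / (f0 a * nderiv a b k.-1 (q k.-1) a) in
  let d := fun k : nat =>
    nderiv a b (n - k) (p k) b / (f0 b * nderiv a b (n.-1 - k) (q k) b) in
  forall x, in_ab a b x ->
    f0 x = f0 a / p 0%N a * p 0%N x
         + \sum_(1 <= k < n.+1)
             (-1) ^+ k * ((\prod_(0 <= i < k) d i) / (\prod_(1 <= i < k.+1) c i))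
             * (f0 a / p 0%N a) * p k x.
Proof.
move=> n0 ab HU Hdim Bp Uf0 f0pos Bq c d x xI.
exact: (main_formula n0 ab HU Hdim Bp Uf0 f0pos Bq xI).
Qed.
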